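(* Let $q\ge 3$ be a prime power, $n\ge 2d\ge 2$, $0\le i\le d$, $1\le j\le d$, $h_{\max}=\min\{i,d-j\}$ and $c=g_{h_{\max}}(i,j)$. If it is not the case that ($n=2d$ and $d-j\le i$), then $$\tfrac49 q^{c}<|G_j(i)|<4q^{c}.$$ If $n=2d$ and $d-j\le i$, then $$1\ge \frac{|G_j(i)|}{|T_{d-j}(i,j)|}\ge \frac{5}{32}.$$
   Context: For integers $m\ge 0$ and $l$, ${m\brack l}=\prod_{t=1}^{l}\frac{q^{m-t+1}-1}{q^t-1}$ for $l\ge0$ and $0$ for $l<0$. For $0\le i,j\le d$, $$G_j(i)=\sum_{h=\max\{0,i-j\}}^{\min\{i,d-j\}}(-1)^{i-h}q^{j(j-i+h)+\binom{i-h}{2}}{i\brack h}{d-h\brack j}{n-d-i+h\brack n-d-j}$$ (the eigenvalues of the Grassmann graph $G_q(n,d,j)$), and $T_h(i,j)$ is the $h$-th summand (and $0$ for $h$ outside the summation range). Also $$g_h(i,j)=-\tfrac12h^2+h\left(n-d-j+\tfrac12\right)+j(d-j)+\tfrac{i(i-1)}{2}+(n-d)(j-i).$$ *)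

(* Defs.v *)
From mathcomp Require Import all_boot all_order all_algebra.
Set Implicit Arguments. Unset Strict Implicit. Unset Printing Implicit Defensive.
Import Order.TTheory GRing.Theory Num.Theory.
Local Open Scope ring_scope.

Definition qbin (q : rat) (m : nat) (l : int) : rat :=
  match l with
  | Posz l' => \prod_(1 <= t < l'.+1)
                 ((q ^ (m%:Z - t%:Z + 1) - 1) / (q ^ (t%:Z) - 1))
  | Negz _ => 0
  end.

(* h-th summand T_h(i,j) of G_j(i) for the Grassmann graph with parameters
   q, n, d; it is 0 for h outside [max(0,i-j), min(i,d-j)]. *)
Definition Tsum (q : rat) (n d i j h : nat) : rat :=
  if ((i - j)%N <= h)%N && (h <= minn i (d - j))%N then
    (-1) ^+ (i - h) *
    q ^ ((j%:Z * (j%:Z - i%:Z + h%:Z)) + ('C(i - h, 2))%:Z) *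
    qbin q i h%:Z * qbin q (d - h) j%:Z *
    qbin q (n - d - i + h) (n%:Z - d%:Z - j%:Z)
  else 0.

Definition Geig (q : rat) (n d i j : nat) : rat :=
  \sum_((i - j)%N <= h < (minn i (d - j)).+1) Tsum q n d i j h.

Definition gexp (n d i j h : nat) : rat :=
  - (h%:R ^+ 2) / 2 + h%:R * ((n%:R - d%:R - j%:R) + 1 / 2)
  + j%:R * (d%:R - j%:R) + i%:R * (i%:R - 1) / 2
  + (n%:R - d%:R) * (j%:R - i%:R).

Definition prime_power (q : nat) : Prop :=
  exists p k : nat, prime p /\ (0 < k)%N /\ q = (p ^ k)%N.

(* Main.v *)
Require Import Defs.
From mathcomp Require Import all_boot all_order all_algebra.
From mathcomp Require Import lra ring zify.
Import Order.TTheory GRing.Theory Num.Theory.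
Local Open Scope ring_scope.

Lemma leE (x y : rat) : x = y -> x <= y. Proof. by move->. Qed.

Lemma arith_ub (q X Y Z P : rat) : 3<=q -> 1<=X -> 1<=Y -> 0<=Z -> 0<=P -> Z*(X+1) <= 2*P*X ->
  Z*(q*X*Y-1)/(q*X-1)*(q*X+1) <= 2*(Y*P)*(q*X).
Proof.
move=> hq hX hY hZ hP IH.
have hqX : 3 <= q * X.
  have := mulr_ge0 (_ : 0 <= q - 3) (_ : 0 <= X - 1). nra.
have hqXY : q * X <= q * X * Y.
  have := mulr_ge0 (_ : 0 <= q * X) (_ : 0 <= Y - 1). nra.
have hd : 0 < q * X - 1 by lra.
rewrite mulrAC ler_pdivrMr //.
have key : (q * X * Y - 1) * (q * X + 1) <= q * Y * (X + 1) * (q * X - 1).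
  have h1 : 0 <= q * Y * (X * (q - 2) - 1).
    apply: mulr_ge0; first by apply: mulr_ge0; lra.
    have := mulr_ge0 (_ : 0 <= X - 1) (_ : 0 <= q - 3). nra.
  have -> : q * Y * (X + 1) * (q * X - 1) = (q * X * Y - 1) * (q * X + 1) + (q * Y * (X * (q - 2) - 1) + q * X + 1) by ring.
  lra.
have hXY : 0 <= q * X * Y - 1 by lra.
have hC : 0 <= q * X + 1 by lra.
have s1 := ler_wpM2r (mulr_ge0 hXY hC) IH.
have s2 : 2 * P * X * ((q * X * Y - 1) * (q * X + 1)) <= 2 * P * X * (q * Y * (X + 1) * (q * X - 1)).
  rewrite ler_wpM2l //. apply: mulr_ge0; [apply: mulr_ge0|]; lra.
have s3 : Z * (q * X * Y - 1) * (q * X + 1) * (X + 1) <= (2 * (Y * P) * (q * X) * (q * X - 1)) * (X + 1).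
  apply: le_trans _ (le_trans s1 (le_trans s2 _)); apply: leE; ring.
by rewrite ler_pM2r in s3 => //; lra.
Qed.

Section Q.
Variable q : rat.
Hypothesis hq : 3 <= q.

Lemma q_ge1 : 1 <= q. Proof. have := hq; lra. Qed.
Lemma pow_ge1 n : 1 <= q ^+ n.
Proof. apply: exprn_ege1; exact: q_ge1. Qed.
Lemma powS_ge n : q <= q ^+ n.+1.
Proof. have h := hq. rewrite exprS -{1}(mulr1 q) ler_pM2l; first exact: pow_ge1. lra. Qed.
Lemma powS_m1_gt0 n : 0 < q ^+ n.+1 - 1.
Proof. have := powS_ge n; have := hq; lra. Qed.

Definition F n := \prod_(0 <= t < n) (q ^+ t.+1 - 1).
Lemma F_S n : F n.+1 = F n * (q ^+ n.+1 - 1).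
Proof. by rewrite /F big_nat_recr. Qed.
Lemma F0 : F 0 = 1. Proof. by rewrite /F big_nil. Qed.
Lemma F_gt0 n : 0 < F n.
Proof. elim: n => [|n IH]; first by rewrite F0. rewrite F_S mulr_gt0 //. exact: powS_m1_gt0. Qed.
Lemma F_neq0 n : F n != 0. Proof. by rewrite gt_eqF // F_gt0. Qed.

Definition qb c b := F (c + b) / (F b * F c).
Lemma qb_S c b : qb c b.+1 = qb c b * (q ^+ (c + b).+1 - 1) / (q ^+ b.+1 - 1).
Proof.
rewrite /qb addnS !F_S.
field. by rewrite !(gt_eqF (F_gt0 _)) (gt_eqF (powS_m1_gt0 _)).
Qed.

Lemma qb_Sc c b : qb c.+1 b = qb c b * (q ^+ (c + b).+1 - 1) / (q ^+ c.+1 - 1).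
Proof.
rewrite /qb addSn !F_S.
field. by rewrite !(gt_eqF (F_gt0 _)) (gt_eqF (powS_m1_gt0 _)).
Qed.
Lemma qb_0b b : qb 0 b = 1.
Proof. rewrite /qb add0n F0 mulr1 divff //; exact: F_neq0. Qed.
Lemma qb_c0 c : qb c 0 = 1.
Proof. rewrite /qb addn0 F0 mul1r divff //; exact: F_neq0. Qed.
Lemma qb_ge0 c b : 0 <= qb c b.
Proof. by rewrite /qb divr_ge0 // ?mulr_ge0 // ltW // F_gt0. Qed.

Lemma qb_lb c b : q ^+ (c * b) <= qb c b.
Proof.
elim: b => [|b IH]; first by rewrite muln0 qb_c0.
rewrite qb_S mulnS exprD.
have h1 := pow_ge1 c. have h2 := powS_m1_gt0 b. have h0 := qb_ge0 c b.
rewrite ler_pdivlMr //.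
have e : q ^+ (c + b).+1 - 1 >= q ^+ c * (q ^+ b.+1 - 1).
  rewrite -addnS exprD. nra.
apply: le_trans (_ : qb c b * (q ^+ c * (q ^+ b.+1 - 1)) <= _); last by rewrite ler_wpM2l.
have hh : 0 <= q ^+ c * (q ^+ b.+1 - 1) by rewrite mulr_ge0 // ?ltW //; lra.
apply: le_trans _ (ler_wpM2r hh IH). apply: leE. ring.
Qed.

Lemma qb_ub c b : qb c b * (q ^+ b + 1) <= 2 * q ^+ (c * b) * q ^+ b.
Proof.
elim: b => [|b IH]; first by rewrite muln0 qb_c0 !expr0; lra.
rewrite qb_S mulnS exprD.
set X := q ^+ b. set Y := q ^+ c. set P := q ^+ (c * b). set Z := qb c b.
have eX : q ^+ b.+1 = q * X by rewrite exprS.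
have eXY : q ^+ (c + b).+1 = q * X * Y by rewrite exprS exprD /X /Y; ring.
rewrite eX eXY.
apply: arith_ub => //; try exact: pow_ge1; try exact: qb_ge0.
by apply: exprn_ge0; have := hq; lra.
Qed.

Lemma qbin_qb a b : (b <= a)%N -> qbin q a (Posz b) = qb (a - b) b.
Proof.
elim: b => [|b IH] hb.
  by rewrite /qbin big_nil subn0 qb_c0.
have -> : qbin q a (Posz b.+1) = qbin q a (Posz b) *
   ((q ^ (a%:Z - (b.+1)%:Z + 1) - 1) / (q ^ ((b.+1)%:Z) - 1)).
  by rewrite /qbin big_nat_recr.
rewrite IH; last by lia.
have hc : (a - b = (a - b.+1).+1)%N by lia.
set c := (a - b.+1)%N.
have -> : (a%:Z - (b.+1)%:Z + 1) = (c.+1)%:Z by rewrite /c; lia.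
rewrite hc qb_Sc qb_S /=.
rewrite -/c. change (q ^ (Posz c.+1)) with (q ^+ c.+1). change (q ^ (Posz b.+1)) with (q ^+ b.+1).
field. by rewrite !(gt_eqF (powS_m1_gt0 _)).
Qed.
End Q.

Definition altS (a : nat -> rat) lo k := \sum_(lo <= h < k.+1) (-1) ^+ (k - h) * a h.

Lemma altS_S a lo k : (lo <= k.+1)%N -> altS a lo k.+1 = a k.+1 - altS a lo k.
Proof.
move=> hk. rewrite /altS big_nat_recr //= subnn expr0 mul1r addrC.
congr (_ + _). rewrite -sumrN. apply: eq_big_nat => h /andP [_ hh].
by rewrite subSn // exprS mulN1r mulNr.
Qed.

Lemma altS_lo a lo : altS a lo lo = a lo.
Proof. by rewrite /altS big_nat1 subnn expr0 mul1r. Qed.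

Lemma alt_bounds (a : nat -> rat) lo H rho :
  (lo <= H)%N -> (forall h, (lo <= h <= H)%N -> 0 <= a h) ->
  (forall h, (lo < h <= H)%N -> a h.-1 <= rho * a h) -> 0 <= rho -> rho <= 1 ->
  (1 - rho) * a H <= altS a lo H /\ altS a lo H <= a H.
Proof.
move=> hlo ha hr hr0 hr1.
have inv : forall k, (lo <= k <= H)%N -> 0 <= altS a lo k <= a k.
  elim=> [|k IH] /andP [h1 h2].
    have e : lo = 0%N by lia. subst. rewrite altS_lo lexx andbT. apply: ha; lia.
  case: (ltngtP lo k.+1) => hh; last first.
  - rewrite -hh altS_lo lexx andbT. apply: ha; lia.
  - lia.
  - rewrite altS_S; last by lia.
    have /andP [i1 i2] := IH (ltac:(lia)).
    have := hr k.+1 (ltac:(lia)). have := ha k.+1 (ltac:(lia)). simpl. move=> p1 p2.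
    apply/andP; split; nra.
case: (ltngtP lo H) => hh; last first.
- rewrite -hh altS_lo. have := ha lo (ltac:(lia)). split; nra.
- lia.
- case: H hh hlo ha hr inv => [|H] hh hlo ha hr inv; first lia.
  rewrite altS_S; last by lia.
  have /andP [i1 i2] := inv H (ltac:(lia)).
  have := hr H.+1 (ltac:(lia)). have := ha H.+1 (ltac:(lia)). simpl. move=> p1 p2.
  split; nra.
Qed.

Lemma ratio_arith (q X U Y V W D : rat) : 3 <= q -> 1 <= X -> q <= U -> q <= Y -> 1 <= V -> q <= W -> 1 <= D ->
  4 * (q * D) * X * (Y * V - 1) * (U - 1) * (W - 1) <= 9 * V * (q * X - 1) * (Y - 1) * (W * (U * D) - 1).
Proof.
move=> hq hX hU hY hV hW hD.
have i1 : (q - 1) * X * (U - 1) <= U * (q * X - 1).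
  have -> : U * (q * X - 1) = (q - 1) * X * (U - 1) + (X * U - U) + ((q-1) * X) by ring.
  have := mulr_ge0 (_ : 0 <= X - 1) (_ : 0 <= U). nra.
have i2 : (q - 1) * (Y * V - 1) <= q * V * (Y - 1).
  have -> : q * V * (Y - 1) = (q - 1) * (Y * V - 1) + (V * (Y - q)) + (q - 1) by ring.
  have := mulr_ge0 (_ : 0 <= V) (_ : 0 <= Y - q). nra.
have hUD : 1 <= U * D.
  have := mulr_ge0 (_ : 0 <= U - 1) (_ : 0 <= D - 1). nra.
have i3 : (W - 1) * (U * D) <= W * (U * D) - 1 by nra.
have p1 : 0 <= (q - 1) * X * (U - 1).
  apply: mulr_ge0; [apply: mulr_ge0|]; lra.
have p2 : 0 <= (q - 1) * (Y * V - 1).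
  apply: mulr_ge0; first lra. have := mulr_ge0 (_ : 0 <= Y - 1) (_ : 0 <= V - 1). nra.
have p3 : 0 <= (W - 1) * (U * D) by apply: mulr_ge0; lra.
have m12 := ler_pM p1 p2 i1 i2.
have m123 := ler_pM (mulr_ge0 p1 p2) p3 m12 i3.
have hq2 : 4 * q * q <= 9 * (q - 1) * (q - 1) by nra.
have r0 : 0 <= U * (q * X - 1) * (q * V * (Y - 1)) * (W * (U * D) - 1).
  apply: mulr_ge0; [apply: mulr_ge0; [apply: mulr_ge0|]|].
  - lra.
  - have := mulr_ge0 (_ : 0 <= q - 3) (_ : 0 <= X - 1). nra.
  - apply: mulr_ge0; [apply: mulr_ge0|]; lra.
  - lra.
have pos : 0 < (q - 1) * (q - 1) * U by apply: mulr_gt0; [apply: mulr_gt0|]; lra.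
rewrite -(ler_pM2r pos).
set Rr := U * (q * X - 1) * (q * V * (Y - 1)) * (W * (U * D) - 1).
have e1 : 4 * (q * D) * X * (Y * V - 1) * (U - 1) * (W - 1) * ((q - 1) * (q - 1) * U)
   = (4 * q) * ((q - 1) * X * (U - 1) * ((q - 1) * (Y * V - 1)) * ((W - 1) * (U * D))) by ring.
have e2 : 9 * V * (q * X - 1) * (Y - 1) * (W * (U * D) - 1) * ((q - 1) * (q - 1) * U)
   = (9 * (q - 1) * (q - 1)) / q * Rr.
  rewrite /Rr. field. lra.
rewrite e1 e2.
apply: le_trans (ler_wpM2l (_ : 0 <= 4 * q) m123) _; first lra.
rewrite -/Rr. 
have -> : 4 * q * Rr = (4 * q * q) / q * Rr by field; lra.
apply: ler_wpM2r => //. rewrite ler_pM2r //; last by rewrite invr_gt0; lra.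
Qed.

Definition Aterm q i j d m h := q ^+ (j * (j + h - i) + 'C(i - h, 2)) * qb q (i - h) h *
   qb q (d - h - j) j * qb q (j + h - i) (m - j).

Lemma A_ratio_core q (hq : 3 <= q) c1 c2 c3 h' j dl E : 0 <= E ->
 4 * q ^+ dl.+1 * (E * q ^+ c1 * qb q c1.+1 h' * qb q c2.+1 j * qb q c3 (h'.+1 + dl)) <=
 9 * (E * q ^+ j * qb q c1 h'.+1 * qb q c2 j * qb q c3.+1 (h'.+1 + dl)).
Proof.
move=> hE.
rewrite (qb_Sc q hq c1 h') (qb_Sc q hq c2 j) (qb_S q hq c1 h') (qb_Sc q hq c3 (h'.+1 + dl)).
have eA : q ^+ (c1 + h').+1 = q ^+ c1 * q ^+ h'.+1 by rewrite -exprD addnS.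
have eB : q ^+ (c2 + j).+1 = q ^+ c2.+1 * q ^+ j by rewrite -exprD addSn.
have eC : q ^+ (c3 + (h'.+1 + dl)).+1 = q ^+ c3.+1 * (q ^+ h'.+1 * q ^+ dl) by rewrite -!exprD; congr (_ ^+ _); lia.
have eD : q ^+ dl.+1 = q * q ^+ dl by rewrite exprS.
have eE : q ^+ c1.+1 = q * q ^+ c1 by rewrite exprS.
rewrite eA eB eC eD eE.
have k1 := qb_ge0 q hq c1 h'. have k2 := qb_ge0 q hq c2 j. have k3 := qb_ge0 q hq c3 (h'.+1 + dl).
have hX := pow_ge1 q hq c1. have hU := powS_ge q hq h'. have hY := powS_ge q hq c2.
have hV := pow_ge1 q hq j. have hW := powS_ge q hq c3. have hD := pow_ge1 q hq dl.
move: k1 k2 k3 hX hU hY hV hW hD.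
move: (qb q c1 h') (qb q c2 j) (qb q c3 (h'.+1 + dl)) (q ^+ c1) (q ^+ h'.+1) (q ^+ c2.+1) (q ^+ j) (q ^+ c3.+1) (q ^+ dl).
move=> Q1 Q2 Q3 X U Y V W D k1 k2 k3 hX hU hY hV hW hD.
have ra := @ratio_arith q _ _ _ _ _ _ hq hX hU hY hV hW hD.
have K0 : 0 <= E * Q1 * Q2 * Q3 * (X * U - 1).
  apply: mulr_ge0; [do 3 (apply: mulr_ge0 => //)|]. have := mulr_ge0 (_ : 0 <= X - 1) (_ : 0 <= U - 1). nra.
have P0 : 0 < (q * X - 1) * (Y - 1) * (U - 1) * (W - 1).
  apply: mulr_gt0; [apply: mulr_gt0; [apply: mulr_gt0|]|]; try lra.
  have := mulr_ge0 (_ : 0 <= q - 3) (_ : 0 <= X - 1). nra.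
have e1 : 4 * (q * D) * (E * X * (Q1 * (X * U - 1) / (q * X - 1)) * (Q2 * (Y * V - 1) / (Y - 1)) * Q3)
  = (E * Q1 * Q2 * Q3 * (X * U - 1)) * ((4 * (q * D) * X * (Y * V - 1) * (U - 1) * (W - 1)) / ((q * X - 1) * (Y - 1) * (U - 1) * (W - 1))).
  field. apply/and4P; split; apply: lt0r_neq0; try lra.
  have := mulr_ge0 (_ : 0 <= q - 3) (_ : 0 <= X - 1). nra.
have e2 : 9 * (E * V * (Q1 * (X * U - 1) / (U - 1)) * Q2 * (Q3 * (W * (U * D) - 1) / (W - 1)))
  = (E * Q1 * Q2 * Q3 * (X * U - 1)) * ((9 * V * (q * X - 1) * (Y - 1) * (W * (U * D) - 1)) / ((q * X - 1) * (Y - 1) * (U - 1) * (W - 1))).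
  field. apply/and4P; split; apply: lt0r_neq0; try lra.
  have := mulr_ge0 (_ : 0 <= q - 3) (_ : 0 <= X - 1). nra.
rewrite e1 e2. apply: ler_wpM2l => //. rewrite ler_pM2r // invr_gt0 //.
Qed.

Lemma A_ratio q (hq : 3 <= q) i j d m h' : (h'.+1 <= i)%N -> (h'.+1 <= d - j)%N ->
  (i <= j + h')%N -> (d <= m)%N -> (j <= d)%N ->
  4 * q ^+ (m - j - h'.+1).+1 * Aterm q i j d m h' <= 9 * Aterm q i j d m h'.+1.
Proof.
move=> h1 h2 h3 h4 h5.
rewrite /Aterm.
set dl := (m - j - h'.+1)%N.
have em : (m - j = h'.+1 + dl)%N by rewrite /dl; lia.
have e1 : (i - h' = (i - h'.+1).+1)%N by lia.
have e2 : (d - h' - j = (d - h'.+1 - j).+1)%N by lia.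
have e3 : (j + h'.+1 - i = (j + h' - i).+1)%N by lia.
rewrite em e1 e2 e3.
set c1 := (i - h'.+1)%N. set c2 := (d - h'.+1 - j)%N. set c3 := (j + h' - i)%N.
have eC : 'C(c1.+1, 2) = ('C(c1, 2) + c1)%N by rewrite binS bin1.
rewrite eC.
have -> : q ^+ (j * c3 + ('C(c1, 2) + c1)) = q ^+ (j * c3 + 'C(c1, 2)) * q ^+ c1 by rewrite -exprD addnA.
have -> : q ^+ (j * c3.+1 + 'C(c1, 2)) = q ^+ (j * c3 + 'C(c1, 2)) * q ^+ j by rewrite -exprD mulnS; congr (_ ^+ _); lia.
apply: A_ratio_core => //. by apply: exprn_ge0; lra.
Qed.

Lemma Tsum_eq (q : nat) (hq : (3 <= q)%N) n d i j h : (2 * d <= n)%N -> (i <= d)%N -> (j <= d)%N ->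
  (i - j <= h)%N -> (h <= minn i (d - j))%N ->
  Tsum q%:R n d i j h = (-1) ^+ (i - h) * Aterm q%:R i j d (n - d) h.
Proof.
move=> hn hi hj h1 h2.
have hq' : 3 <= (q%:R : rat) by rewrite (ler_nat _ 3 q).
rewrite /Tsum ifT; last by rewrite h1 h2.
have E : (j%:Z * (j%:Z - i%:Z + h%:Z) + ('C(i - h, 2))%:Z) = Posz (j * (j + h - i) + 'C(i - h, 2))%N.
  have -> : (j%:Z - i%:Z + h%:Z) = Posz (j + h - i)%N by lia.
  by rewrite PoszD PoszM.
rewrite E.
have E2 : (n%:Z - d%:Z - j%:Z) = Posz (n - d - j)%N by lia.
rewrite E2.
rewrite (@qbin_qb q%:R hq' i h); last by lia.
rewrite (@qbin_qb q%:R hq' (d - h) j); last by lia.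
rewrite (@qbin_qb q%:R hq' (n - d - i + h) (n - d - j)); last by lia.
have -> : (n - d - i + h - (n - d - j) = j + h - i)%N by lia.
rewrite /Aterm !mulrA.
by [].
Qed.

Lemma bin2_rat (k : nat) : ('C(k, 2))%:R * 2 = (k%:R * (k%:R - 1) : rat).
Proof.
elim: k => [|k IH]; first by rewrite bin0n mul0r mul0r.
rewrite binS bin1 natrD mulrDl IH -addn1 natrD. ring.
Qed.

Lemma qb_lt2 q (hq : 3 <= q) c b : qb q c b < 2 * q ^+ (c * b).
Proof.
have h := qb_ub q hq c b. have h0 := qb_ge0 q hq c b. have h1 := pow_ge1 q hq b.
have hp : 0 < q ^+ (c * b) by apply: exprn_gt0; lra.
case: (ltP (qb q c b) (2 * q ^+ (c * b))) => // hc.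
have := ler_wpM2r (_ : 0 <= q ^+ b) hc. nra.
Qed.

Lemma qb_pos q (hq : 3 <= q) c b : 0 < qb q c b.
Proof. apply: lt_le_trans (qb_lb q hq c b). apply: exprn_gt0; lra. Qed.


Definition Eexp i j d m H := (j * (j + H - i) + 'C(i - H, 2) + (i - H) * H + (d - H - j) * j + (j + H - i) * (m - j))%N.

Lemma A_nonneg Q (hQ : 3 <= Q) i j d m h : 0 <= Aterm Q i j d m h.
Proof.
rewrite /Aterm. do 3 (apply: mulr_ge0; last exact: qb_ge0).
apply: exprn_ge0; lra.
Qed.

Lemma A_lb Q (hQ : 3 <= Q) i j d m H : Q ^+ (Eexp i j d m H) <= Aterm Q i j d m H.
Proof.
have g : forall k, 0 <= Q ^+ k by move=> k; apply: exprn_ge0; lra.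
have p1 := qb_lb Q hQ (i - H) H. have p2 := qb_lb Q hQ (d - H - j) j.
have p3 := qb_lb Q hQ (j + H - i) (m - j).
rewrite /Aterm /Eexp !exprD.
apply: ler_pM => //; first by rewrite !mulr_ge0.
apply: ler_pM => //; first by rewrite !mulr_ge0.
apply: ler_pM => //. by rewrite mulr_ge0.
Qed.

Lemma fin4a (A x2 x3 y2 y3 : rat) : 0 < A -> 0 < x2 -> 0 < x3 -> x2 < 2 * y2 -> x3 < 2 * y3 ->
  A * 1 * 1 * x2 * x3 < 4 * (A * 1 * 1 * y2 * y3).
Proof.
move=> hA h2 h3 l2 l3. have P := ltr_pM (ltW h2) (ltW h3) l2 l3.
rewrite !mulr1 -!mulrA (mulrCA 4) ltr_pM2l //. apply: lt_le_trans P _. apply: leE; ring.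
Qed.
Lemma fin4b (A B x2 x3 y2 y3 : rat) : 0 < A -> 0 < B -> 0 < x2 -> 0 < x3 -> x2 < 2 * y2 -> x3 < 2 * y3 ->
  A * B * x2 * 1 * x3 < 4 * (A * B * y2 * 1 * y3).
Proof.
move=> hA hB h2 h3 l2 l3. have P := ltr_pM (ltW h2) (ltW h3) l2 l3.
rewrite !mulr1 -!mulrA (mulrCA 4) ltr_pM2l // (mulrCA 4) ltr_pM2l //. apply: lt_le_trans P _. apply: leE; ring.
Qed.

Lemma A_ub Q (hQ : 3 <= Q) i j d m H : (i - H = 0 \/ d - H - j = 0)%N -> Aterm Q i j d m H < 4 * Q ^+ (Eexp i j d m H).
Proof.
move=> hH.
have g : forall k, 0 < Q ^+ k by move=> k; apply: exprn_gt0; lra.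
have l1 := qb_lt2 Q hQ (i - H) H. have l2 := qb_lt2 Q hQ (d - H - j) j.
have l3 := qb_lt2 Q hQ (j + H - i) (m - j).
have q1 := qb_pos Q hQ (i - H) H. have q2 := qb_pos Q hQ (d - H - j) j.
have q3 := qb_pos Q hQ (j + H - i) (m - j).
rewrite /Aterm /Eexp !exprD.
case: hH => ->; rewrite (qb_0b Q hQ) ?mul0n ?expr0.
- by apply: fin4a => //; exact: g.
- by apply: fin4b => //; exact: g.
Qed.

Lemma A_rho Q (hQ : 3 <= Q) i j d m h : (h <= i)%N -> (h <= d - j)%N -> (i - j < h)%N ->
  (d <= m)%N -> (j <= d)%N ->
  Aterm Q i j d m h.-1 <= 3 / 4 * Aterm Q i j d m h /\
  ((h + j < m)%N -> Aterm Q i j d m h.-1 <= 1 / 4 * Aterm Q i j d m h).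
Proof.
case: h => [|h'] h1 h2 h3 h4 h5; first lia.
have r := A_ratio Q hQ i j d m h' h1 h2 (ltac:(lia)) h4 h5.
rewrite /=.
move: r (A_nonneg Q hQ i j d m h') (A_nonneg Q hQ i j d m h'.+1).
have hk : forall k, Q <= Q ^+ k.+1 by move=> k; apply: powS_ge.
have hk2 : (h'.+1 + j < m)%N -> 9 <= Q ^+ (m - j - h'.+1).+1.
  move=> hh. have : (m - j - h'.+1 = (m - j - h'.+2).+1)%N by lia.
  move=> ->. rewrite exprS. have := hk (m - j - h'.+2)%N => pk.
  have : 3 * 3 <= Q * Q ^+ (m - j - h'.+2).+1 by apply: ler_pM; lra.
  lra.
move: hk2 (hk (m - j - h'.+1)%N).
move: (Q ^+ (m - j - h'.+1).+1) (Aterm Q i j d m h') (Aterm Q i j d m h'.+1).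
move=> P x y hP9 hP r x0 y0.
split.
- have h12 : 12 <= 4 * P by lra.
  have := ler_wpM2r x0 h12. lra.
- move=> hh. have := hP9 hh => p9.
  have h36 : 36 <= 4 * P by lra.
  have := ler_wpM2r x0 h36. lra.
Qed.

Lemma Eexp_gexp n d i j H : (H <= i)%N -> (H <= d - j)%N -> (i <= j + H)%N -> (2 * d <= n)%N -> (j <= d)%N ->
  ((Eexp i j d (n - d) H)%:R : rat) = gexp n d i j H.
Proof.
move=> h1 h2 h3 h4 h5.
have e1 : ((j + H - i)%N%:R : rat) = j%:R + H%:R - i%:R by rewrite natrB ?natrD //; lia.
have e2 : ((i - H)%N%:R : rat) = i%:R - H%:R by rewrite natrB //.
have e3 : ((d - H - j)%N%:R : rat) = d%:R - H%:R - j%:R by rewrite !natrB //; lia.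
have e4 : ((n - d - j)%N%:R : rat) = n%:R - d%:R - j%:R by rewrite !natrB //; lia.
have c2 := bin2_rat (i - H).
have eC : (('C(i - H, 2))%:R : rat) = (i%:R - H%:R) * (i%:R - H%:R - 1) / 2.
  by rewrite -e2 -c2; field.
rewrite /Eexp /gexp !natrD !natrM eC e1 e2 e3 e4.
by field.
Qed.

Lemma Geig_alt (q : nat) (hq : (3 <= q)%N) n d i j : (2 * d <= n)%N -> (i <= d)%N -> (j <= d)%N ->
  Geig q%:R n d i j = (-1) ^+ (i - minn i (d - j)) * altS (Aterm q%:R i j d (n - d)) (i - j) (minn i (d - j)).
Proof.
move=> hn hi hj.
rewrite /Geig /altS mulr_sumr. apply: eq_big_nat => h /andP [h1 h2].
rewrite Tsum_eq //; try lia.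
rewrite mulrA -exprD. congr (_ ^+ _ * _). lia.
Qed.

Lemma fin_ratio (S aH : rat) : 0 < aH -> (1 - 3/4) * aH <= S -> S <= aH -> S / aH <= 1 /\ 5 / 32 <= S / aH.
Proof.
move=> h b1 b2. split.
- rewrite (ler_pdivrMr _ _ h) mul1r. exact: b2.
- rewrite (ler_pdivlMr _ _ h). lra.
Qed.

Theorem lemma3p2 (q n d i j : nat) :
  prime_power q -> (3 <= q)%N ->
  (2 * d <= n)%N -> (1 <= d)%N ->
  (i <= d)%N -> (1 <= j)%N -> (j <= d)%N ->
  (~ (n = (2 * d)%N /\ (d - j <= i)%N) ->
     exists c : int,
       (c%:~R : rat) = gexp n d i j (minn i (d - j)) /\
       (4 / 9) * (q%:R : rat) ^ c < `|Geig q%:R n d i j| /\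
       `|Geig q%:R n d i j| < 4 * (q%:R : rat) ^ c) /\
  ((n = (2 * d)%N /\ (d - j <= i)%N) ->
     `|Geig q%:R n d i j| / `|Tsum q%:R n d i j (d - j)| <= 1 /\
     5 / 32 <= `|Geig q%:R n d i j| / `|Tsum q%:R n d i j (d - j)|).
Proof.
move=> _ hq3 hn hd hi hj1 hjd.
have hQ : 3 <= (q%:R : rat) by rewrite (ler_nat _ 3 q).
rewrite (@Geig_alt q hq3 n d i j hn hi hjd).
have [H eH] : exists H, H = minn i (d - j) by eexists.
rewrite -eH.
have hHi : (H <= i)%N by clear -eH; lia.
have hHd : (H <= d - j)%N by clear -eH; lia.
have hHl : (i <= j + H)%N by clear -eH hi; lia.
have hloH : (i - j <= H)%N by clear -eH hi; lia.
have hdm : (d <= n - d)%N by clear -hn; lia.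
have HH : (i - H = 0 \/ d - H - j = 0)%N by clear -eH; lia.
have HH2 : (~ (n = (2 * d)%N /\ (d - j <= i)%N)) -> (H + j < n - d)%N.
  by clear -eH hn hjd hi; lia.
have HH3 : (n = (2 * d)%N /\ (d - j <= i)%N) -> H = (d - j)%N.
  by clear -eH; lia.
have s1 : (i - j <= d - j)%N by clear -hi; lia.
have s2 : (d - j <= minn i (d - j))%N -> True by [].
have hrange : forall h, (i - j < h <= H)%N -> [/\ (h <= i)%N, (h <= d - j)%N & (i - j < h)%N].
  move=> h /andP [l1 l2]. split => //; [exact: leq_trans l2 hHi | exact: leq_trans l2 hHd].
have ha : forall h, (i - j <= h <= H)%N -> 0 <= Aterm q%:R i j d (n - d) h.
  by move=> h _; apply: A_nonneg.
have rho34 : forall h, (i - j < h <= H)%N -> Aterm q%:R i j d (n - d) h.-1 <= 3 / 4 * Aterm q%:R i j d (n - d) h.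
  move=> h hh. case: (hrange h hh) => r1 r2 r3.
  by case: (@A_rho _ hQ i j d (n - d) h r1 r2 r3 hdm hjd).
have Hpos := A_lb _ hQ i j d (n - d) H.
have QE : 0 < (q%:R : rat) ^+ Eexp i j d (n - d) H by apply: exprn_gt0; lra.
have eGx : forall S : rat, 0 <= S -> `|(-1) ^+ (i - H) * S| = S.
  by move=> S hS; rewrite normrM normr_sign mul1r ger0_norm.
split.
- move=> hc.
  have hHj := HH2 hc.
  have rho14 : forall h, (i - j < h <= H)%N -> Aterm q%:R i j d (n - d) h.-1 <= 1 / 4 * Aterm q%:R i j d (n - d) h.
    move=> h hh. case: (hrange h hh) => r1 r2 r3.
    case: (@A_rho _ hQ i j d (n - d) h r1 r2 r3 hdm hjd) => _; apply.
    case/andP: hh => _ l2. apply: leq_ltn_trans hHj. by rewrite leq_add2r.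
  have [b1 b2] := @alt_bounds (Aterm q%:R i j d (n - d)) (i - j) H (1/4) hloH ha rho14 (ltac:(lra)) (ltac:(lra)).
  have AH4 := @A_ub _ hQ i j d (n - d) H HH.
  exists (Posz (Eexp i j d (n - d) H)).
  rewrite eGx; last by lra.
  have EG := @Eexp_gexp n d i j H hHi hHd hHl hn hjd.
  move: b1 b2 AH4 Hpos QE.
  move: (altS (Aterm q%:R i j d (n - d)) (i - j) H) (Aterm q%:R i j d (n - d) H) => S aH b1 b2 AH4 Hpos QE.
  split; last split.
  + exact: EG.
  + change (4 / 9 * (q%:R : rat) ^+ (Eexp i j d (n - d) H) < S). lra.
  + change (S < 4 * (q%:R : rat) ^+ (Eexp i j d (n - d) H)). lra.
- move=> hc.
  have eH2 := HH3 hc.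
  have [b1 b2] := @alt_bounds (Aterm q%:R i j d (n - d)) (i - j) H (3/4) hloH ha rho34 (ltac:(lra)) (ltac:(lra)).
  have s3 : (d - j <= minn i (d - j))%N by rewrite -eH -eH2.
  have eT : Tsum q%:R n d i j (d - j) = (-1) ^+ (i - H) * Aterm q%:R i j d (n - d) H.
    by rewrite (@Tsum_eq q hq3 n d i j (d - j) hn hi hjd s1 s3) eH2.
  rewrite eT eGx; last by lra.
  rewrite eGx; last by lra.
  move: b1 b2 Hpos QE.
  move: (altS (Aterm q%:R i j d (n - d)) (i - j) H) (Aterm q%:R i j d (n - d) H) => S aH b1 b2 Hpos QE.
  have aHp : 0 < aH by lra.
  exact: fin_ratio.
Qed.
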